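(* Let $l\le m$ be integers. Then in $\wedge^{m-l+2}V_{\mathrm{aff}}$ one has $u_m\wedge u_{m-1}\wedge\cdots\wedge u_{l+1}\wedge u_l\wedge u_m=0$ and $u_l\wedge u_m\wedge u_{m-1}\wedge\cdots\wedge u_{l+1}\wedge u_l=0$.
   Context: Let $N,L\ge 1$ be integers, $q$ an indeterminate and $\mathbb K=\mathbb Q(q^{1/(2N)})$. Let $\mathbb K^L$ have basis $\mathfrak e_1,\dots,\mathfrak e_L$, $\mathbb K^N$ have basis $\mathfrak v_1,\dots,\mathfrak v_N$, and $V_{\mathrm{aff}}=\mathbb K[z^{\pm1}]\otimes\mathbb K^L\otimes\mathbb K^N$, with basis $z^m\mathfrak e_a\mathfrak v_\epsilon$. Identify $V_{\mathrm{aff}}^{\otimes n}=(\mathbb K[z^{\pm1}]\otimes\mathbb K^L)^{\otimes n}\otimes(\mathbb K^N)^{\otimes n}$, and $(\mathbb K[z^{\pm1}]\otimes\mathbb K^L)^{\otimes n}=\mathbb K[z_1^{\pm1},\dots,z_n^{\pm1}]\otimes(\mathbb K^L)^{\otimes n}$ via $z^{m_1}\mathfrak e_{a_1}\otimes\cdots\otimes z^{m_n}\mathfrak e_{a_n}\mapsto z_1^{m_1}\cdots z_n^{m_n}\otimes\mathfrak e_{a_1}\otimes\cdots\otimes\mathfrak e_{a_n}$. With $E_{a,b}$ the matrix units of $\mathbb K^L$ put $R(z_1,z_2)=(q^2z_1-z_2)\sum_{a}E_{a,a}\otimes E_{a,a}+q(z_1-z_2)\sum_{a\neq b}E_{a,a}\otimes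 E_{b,b}+z_1(q^2-1)\sum_{a<b}E_{a,b}\otimes E_{b,a}+z_2(q^2-1)\sum_{a>b}E_{a,b}\otimes E_{b,a}$, let $s$ be the operator exchanging the two tensor factors of $(\mathbb K[z^{\pm1}]\otimes\mathbb K^L)^{\otimes 2}$, and $\overset{c}{T}=\frac{z_1-q^2z_2}{z_1-z_2}\bigl(1-s\cdot\frac{R(z_1,z_2)}{q^2z_1-z_2}\bigr)-1$ (a well-defined operator on $\mathbb K[z_1^{\pm1},z_2^{\pm1}]\otimes(\mathbb K^L)^{\otimes2}$). Let $\overset{s}{T}$ on $(\mathbb K^N)^{\otimes 2}$ send $\mathfrak v_{\epsilon_1}\otimes\mathfrak v_{\epsilon_2}$ to $q^2\mathfrak v_{\epsilon_1}\otimes\mathfrak v_{\epsilon_2}$ if $\epsilon_1=\epsilon_2$, to $q\,\mathfrak v_{\epsilon_2}\otimes\mathfrak v_{\epsilon_1}$ if $\epsilon_1<\epsilon_2$, and to $q\,\mathfrak v_{\epsilon_2}\otimes\mathfrak v_{\epsilon_1}+(q^2-1)\mathfrak v_{\epsilon_1}\otimes\mathfrak v_{\epsilon_2}$ if $\epsilon_1>\epsilon_2$. For $1\le i<n$ let $\overset{c}{T}_i$ (resp. $\overset{s}{T}_i$) be $\overset{c}{T}$ (resp. $\overset{s}{T}$) acting in the $i$th and $(i+1)$st tensor factors of $(\mathbb K[z^{\pm1}]\otimes\mathbb K^L)^{\otimes n}$ (resp. $(\mathbb K^N)^{\otimes n}$), extended to $V_{\mathrm{aff}}^{\otimes n}$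 by the identity on the other factor. The ($q$-)wedge product is $\wedge^nV_{\mathrm{aff}}=V_{\mathrm{aff}}^{\otimes n}/\sum_{i=1}^{n-1}\mathrm{Im}(\overset{c}{T}_i-\overset{s}{T}_i)$, with quotient map denoted $\wedge$. Every $k\in\mathbb Z$ is written uniquely as $k=\bar k-N(\dot k+L\underline k)$ with $\bar k\in\{1,\dots,N\}$, $\dot k\in\{1,\dots,L\}$, $\underline k\in\mathbb Z$; put $u_k=z^{\underline k}\mathfrak e_{\dot k}\mathfrak v_{\bar k}$, so $\{u_k\}_{k\in\mathbb Z}$ is a basis of $V_{\mathrm{aff}}$. The wedge $u_{k_1}\wedge\cdots\wedge u_{k_n}$ is the image of $u_{k_1}\otimes\cdots\otimes u_{k_n}$; it is called normally ordered if $k_1>k_2>\cdots>k_n$. *)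

(* Defs.v *)
From HB Require Import structures.
From mathcomp Require Import all_boot all_order all_algebra.
Set Implicit Arguments. Unset Strict Implicit. Unset Printing Implicit Defensive.
Import Order.TTheory GRing.Theory Num.Theory.
Local Open Scope ring_scope.

(* The field K = Q(q^{1/(2N)}): rational functions in t := q^{1/(2N)}. *)
Definition Kf : fieldType := {fraction {poly rat}}.
Definition tK : Kf := tofrac ('X : {poly rat}).
Definition qK (N : nat) : Kf := tK ^+ (2 * N).

Section Tensor.
Variables (N L n : nat).
Local Notation q := (qK N).

(* Basis index of V_aff^{\otimes n}: for each tensor position j an exponent
   m_j of z, a colour a_j of K^L (0-based: ordinal a stands for e_{a+1}) and a
   spin eps_j of K^N (0-based).  An element of V_aff^{\otimes n} is a finitely
   supported coefficient function Idx -> K. *)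
Definition Idx := {ffun 'I_n -> (int * 'I_L) * 'I_N}.
Definition Vt := Idx -> Kf.

Definition finsupp (f : Vt) : Prop :=
  exists s : seq Idx, forall y, y \notin s -> f y = 0.

Definition zexp (y : Idx) (p : nat) : int :=
  if insub p is Some j then (y j).1.1 else 0.
Definition eidx (y : Idx) (p : nat) : nat :=
  if insub p is Some j then ((y j).1.2 : nat) else 0%N.
Definition vidx (y : Idx) (p : nat) : nat :=
  if insub p is Some j then ((y j).2 : nat) else 0%N.

Definition shiftz (p : nat) (d : int) (y : Idx) : Idx :=
  [ffun j : 'I_n => if (j : nat) == p then (((y j).1.1 + d, (y j).1.2), (y j).2)
             else y j].
Definition swapze (p p' : nat) (y : Idx) : Idx :=
  [ffun j : 'I_n => if insub p is Some jp then if insub p' is Some jp' then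
      if (j : nat) == p then ((y jp').1, (y j).2)
      else if (j : nat) == p' then ((y jp).1, (y j).2) else y j
    else y j else y j].
Definition swape (p p' : nat) (y : Idx) : Idx :=
  [ffun j : 'I_n => if insub p is Some jp then if insub p' is Some jp' then
      if (j : nat) == p then (((y j).1.1, (y jp').1.2), (y j).2)
      else if (j : nat) == p' then (((y j).1.1, (y jp).1.2), (y j).2) else y j
    else y j else y j].
Definition swapv (p p' : nat) (y : Idx) : Idx :=
  [ffun j : 'I_n => if insub p is Some jp then if insub p' is Some jp' then
      if (j : nat) == p then ((y j).1, (y jp').2)
      else if (j : nat) == p' then ((y j).1, (y jp).2) else y j
    else y j else y j].

(* multiplication by z_p (coefficient of z^m comes from z^{m-1}) *)
Definition mulz (p : nat) (f : Vt) : Vt := fun y => f (shiftz p (-1) y).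
Definition sflip (p : nat) (f : Vt) : Vt := fun y => f (swapze p p.+1 y).
Definition Rop (p : nat) (f : Vt) : Vt := fun y =>
  let a := eidx y p in let b := eidx y p.+1 in
  if a == b then q ^+ 2 * mulz p f y - mulz p.+1 f y
  else q * (mulz p f y - mulz p.+1 f y)
       + (q ^+ 2 - 1) * (if (a < b)%N then mulz p f (swape p p.+1 y)
                         else mulz p.+1 f (swape p p.+1 y)).
Definition sTop (p : nat) (f : Vt) : Vt := fun y =>
  let e1 := vidx y p in let e2 := vidx y p.+1 in
  if e1 == e2 then q ^+ 2 * f y
  else q * f (swapv p p.+1 y) + (if (e2 < e1)%N then (q ^+ 2 - 1) * f y else 0).

(* g = \overset{c}{T}_p w, characterised by clearing the denominators of
     cT = (z1 - q^2 z2)/(z1 - z2) (1 - s R(z1,z2)/(q^2 z1 - z2)) - 1,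
   using s (X/(q^2 z1 - z2)) = s(X)/(q^2 z2 - z1):
     (z1 - z2)(q^2 z2 - z1)(g + w) = (z1 - q^2 z2)((q^2 z2 - z1) w - s(R w)).
   Since multiplication by a nonzero Laurent polynomial is injective on
   finitely supported g, this determines g uniquely. *)
Definition cT_rel (p : nat) (w g : Vt) : Prop :=
  let D1 := fun f : Vt => fun y => mulz p f y - mulz p.+1 f y in
  let D2 := fun f : Vt => fun y => q ^+ 2 * mulz p.+1 f y - mulz p f y in
  let D3 := fun f : Vt => fun y => mulz p f y - q ^+ 2 * mulz p.+1 f y in
  D1 (D2 (fun y => g y + w y)) = D3 (fun y => D2 w y - sflip p (Rop p w) y).

(* x lies in \sum_{i=1}^{n-1} Im(cT_i - sT_i)  (0-based positions p, p+1) *)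
Definition in_relations (x : Vt) : Prop :=
  exists (w g : nat -> Vt),
    (forall p, (p.+1 < n)%N -> [/\ finsupp (w p), finsupp (g p) & cT_rel p (w p) (g p)])
    /\ x = fun y => \sum_(p < n.-1) (g p y - sTop p (w p) y).

End Tensor.

(* k = kbar - N (kdot + L kunder), kbar in 1..N, kdot in 1..L *)
Definition kbar (N : nat) (k : int) : int := ((k - 1) %% N%:Z)%Z + 1.
Definition kdot (N L : nat) (k : int) : int :=
  ((- ((k - 1) %/ N%:Z)%Z - 1) %% L%:Z)%Z + 1.
Definition kunder (N L : nat) (k : int) : int :=
  ((- ((k - 1) %/ N%:Z)%Z - 1) %/ L%:Z)%Z.

Definition utensor (N L : nat) (ks : seq int) : @Vt N L (size ks) := fun y =>
  if [forall j : 'I_(size ks),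
        [&& (y j).1.1 == kunder N L (nth 0 ks j),
            ((y j).1.2 : nat)%:Z + 1 == kdot N L (nth 0 ks j) &
            ((y j).2 : nat)%:Z + 1 == kbar N (nth 0 ks j)]]
  then 1 else 0.

Definition wedge_zero (N L : nat) (ks : seq int) : Prop :=
  @in_relations N L (size ks) (@utensor N L ks).

Definition downfrom (m l : int) : seq int :=
  [seq m - (j%:Z) | j <- iota 0 (`|m - l|%N).+1].

(* Main.v *)
Require Import Defs.
From mathcomp Require Import all_boot all_order all_algebra.
From mathcomp Require Import zify ring lra.
From Stdlib Require Import FunctionalExtensionality.
Set Implicit Arguments. Unset Strict Implicit. Unset Printing Implicit Defensive.
Import Order.TTheory GRing.Theory Num.Theory.
Local Open Scope ring_scope.

Lemma q_neq0 N : qK N != 0.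
Proof. by rewrite /qK /tK expf_neq0 // tofrac_eq0 polyX_eq0. Qed.
Lemma q2p1_neq0 N : (0 < N)%N -> 1 + qK N ^+ 2 != 0.
Proof.
move=> HN; rewrite /qK /tK -exprM -tofracXn -tofrac1 -tofracD tofrac_eq0.
apply/eqP => H; have := congr1 (fun P : {poly rat} => P`_0) H.
rewrite coefD coef1 coefXn /= coef0.
have -> : (0 == 2 * N * 2)%N = false by rewrite eq_sym !muln_eq0 (gtn_eqF HN).
by rewrite addr0 => /eqP; rewrite oner_eq0.
Qed.

Section All.
Variables (N L n : nat) (HN : (0 < N)%N) (HL : (0 < L)%N).
Local Notation Idx := (Idx N L n).
Local Notation Vt := (Defs.Vt N L n).
Local Notation q := (qK N).



Definition Atom := ((int * 'I_L) * 'I_N)%type.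

Definition bd (k : int) : int := ((k - 1) %% N%:Z)%Z.
Definition ed (k : int) : int := ((- ((k - 1) %/ N%:Z)%Z - 1) %% L%:Z)%Z.

Lemma bd_ge0 k : 0 <= bd k.
Proof. by rewrite /bd modz_ge0 // eqz_nat -lt0n. Qed.
Lemma ed_ge0 k : 0 <= ed k.
Proof. by rewrite /ed modz_ge0 // eqz_nat -lt0n. Qed.
Lemma bd_lt k : (`|bd k| < N)%N.
Proof. rewrite -ltz_nat gez0_abs ?bd_ge0 //; exact: ltz_pmod. Qed.
Lemma ed_lt k : (`|ed k| < L)%N.
Proof. rewrite -ltz_nat gez0_abs ?ed_ge0 //; exact: ltz_pmod. Qed.

Definition atom (k : int) : Atom :=
  ((kunder N L k, Ordinal (ed_lt k)), Ordinal (bd_lt k)).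
Definition kof (x : Atom) : int :=
  (x.2 : nat)%:Z + 1 - N%:Z * ((x.1.2 : nat)%:Z + 1 + L%:Z * x.1.1).

Lemma kofK k : kof (atom k) = k.
Proof.
rewrite /kof /atom /= !gez0_abs ?bd_ge0 ?ed_ge0 //.
rewrite /bd /ed /kunder.
set Q := ((k - 1) %/ N%:Z)%Z.
have E1 := divz_eq (k - 1) N%:Z.
have E2 := divz_eq (- Q - 1) L%:Z.
rewrite -/Q in E1.
set R := ((- Q - 1) %/ L%:Z)%Z in E2 *.
set E := ((- Q - 1) %% L%:Z)%Z in E2 *.
set B := ((k - 1) %% N%:Z)%Z in E1 *.
have -> : E + 1 + L%:Z * R = - Q by rewrite [L%:Z * R]mulrC; lra.
rewrite mulrN; lra.
Qed.

Lemma atomK x : atom (kof x) = x.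
Proof.
case: x => [[u e] b].
have HNz : N%:Z != 0 by rewrite eqz_nat -lt0n.
have HLz : L%:Z != 0 by rewrite eqz_nat -lt0n.
have eb : (kof ((u, e), b) - 1)%R = (- ((e : nat)%:Z + 1 + L%:Z * u)) * N%:Z + (b : nat)%:Z.
  rewrite /kof /=; ring.
have Hb : (0 <= (b : nat)%:Z < N%:Z) by have := ltn_ord b; lia.
have He : (0 <= (e : nat)%:Z < L%:Z) by have := ltn_ord e; lia.
have D1 : ((kof ((u, e), b) - 1) %/ N%:Z)%Z = - ((e : nat)%:Z + 1 + L%:Z * u).
  by rewrite eb divzMDl // divz_small ?addr0 // gez0_abs.
have M1 : ((kof ((u, e), b) - 1) %% N%:Z)%Z = (b : nat)%:Z.
  by rewrite eb modzMDl modz_small.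
have e2 : (- ((kof ((u, e), b) - 1) %/ N%:Z)%Z - 1 : int) = u * L%:Z + (e : nat)%:Z.
  rewrite D1; ring.
have D2 : ((- ((kof ((u, e), b) - 1) %/ N%:Z)%Z - 1) %/ L%:Z)%Z = u.
  by rewrite e2 divzMDl // divz_small ?addr0 // gez0_abs.
have M2 : ((- ((kof ((u, e), b) - 1) %/ N%:Z)%Z - 1) %% L%:Z)%Z = (e : nat)%:Z.
  by rewrite e2 modzMDl modz_small.
rewrite /atom; congr (_, _); [congr (_, _)|].
- by rewrite /kunder D2.
- by apply: val_inj => /=; rewrite /ed M2.
- by apply: val_inj => /=; rewrite /bd M1.
Qed.

Lemma atom_inj : injective atom.
Proof. by move=> x y E; rewrite -(kofK x) -(kofK y) E. Qed.



Lemma insub_ord (r : nat) (Hr : (r < n)%N) : insub r = Some (Ordinal Hr) :> option 'I_n.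
Proof. by case: insubP => [u _ Hu|]; [congr Some; exact: val_inj | rewrite Hr]. Qed.

Lemma shiftzK r a b (y : Idx) : shiftz r a (shiftz r b y) = shiftz r (b + a) y.
Proof. by apply/ffunP => j; rewrite !ffunE; case: eqP => //= _; rewrite addrA. Qed.

Lemma shiftzC r s a b (y : Idx) : shiftz r a (shiftz s b y) = shiftz s b (shiftz r a y).
Proof.
apply/ffunP => j; rewrite !ffunE.
by case: eqP => Hr; case: eqP => Hs //=; rewrite addrAC.
Qed.

Lemma shiftz0 r (y : Idx) : shiftz r 0 y = y.
Proof. apply/ffunP => j; rewrite !ffunE; case: eqP => //= _; rewrite addr0; by case: (y j) => [[]]. Qed.

Section Pos.
Variable p : nat.
Hypothesis Hp1 : (p.+1 < n)%N.
Let Hp : (p < n)%N := ltnW Hp1.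

Lemma neq_pS : (p == p.+1) = false. Proof. by elim: p. Qed.
Lemma neq_Sp : (p.+1 == p) = false. Proof. by elim: p. Qed.

Definition sh (i j : nat) (y : Idx) : Idx := shiftz p (- i%:Z) (shiftz p.+1 (- j%:Z) y).

Lemma sh00 y : sh 0 0 y = y.
Proof. apply/ffunP => j; rewrite !ffunE. case: eqP => _; case: eqP => _ /=; rewrite ?oppr0 ?addr0 //; by case: (y j) => [[]]. Qed.

Lemma shP1 i j y : shiftz p (-1) (sh i j y) = sh i.+1 j y.
Proof. by rewrite /sh shiftzK; congr shiftz; lia. Qed.

Lemma shP2 i j y : shiftz p.+1 (-1) (sh i j y) = sh i j.+1 y.
Proof. by rewrite /sh shiftzC shiftzK; congr shiftz; congr shiftz; lia. Qed.

Ltac ordcase j :=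
  let E := fresh "E" in let E2 := fresh "E" in
  case: (eqVneq (j : nat) p) => E;
  [ have -> : j = Ordinal Hp by apply: val_inj
  | case: (eqVneq (j : nat) p.+1) => E2;
    [ have -> : j = Ordinal Hp1 by apply: val_inj |] ];
  rewrite /= ?eqxx ?neq_pS ?neq_Sp ?E ?E2 //=.

Lemma swapze_sh i j y : swapze p p.+1 (sh i j y) = sh j i (swapze p p.+1 y).
Proof.
apply/ffunP => r; rewrite /swapze /sh (insub_ord Hp) (insub_ord Hp1) !ffunE.
by ordcase r; rewrite ?ffunE /= ?eqxx ?neq_pS ?neq_Sp.
Qed.

Lemma swape_sh i j y : swape p p.+1 (sh i j y) = sh i j (swape p p.+1 y).
Proof.
apply/ffunP => r; rewrite /swape /sh (insub_ord Hp) (insub_ord Hp1) !ffunE.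
by ordcase r; rewrite ?ffunE /= ?eqxx ?neq_pS ?neq_Sp.
Qed.

Lemma swapv_sh i j y : swapv p p.+1 (sh i j y) = sh i j (swapv p p.+1 y).
Proof.
apply/ffunP => r; rewrite /swapv /sh (insub_ord Hp) (insub_ord Hp1) !ffunE.
by ordcase r; rewrite ?ffunE /= ?eqxx ?neq_pS ?neq_Sp.
Qed.

Lemma eidx_sh i j y r : eidx (sh i j y) r = eidx y r.
Proof.
rewrite /eidx; case: insubP => // u _ _; rewrite /sh !ffunE.
by do 2 case: eqP => //=.
Qed.

Lemma vidx_sh i j y r : vidx (sh i j y) r = vidx y r.
Proof.
rewrite /vidx; case: insubP => // u _ _; rewrite /sh !ffunE.
by do 2 case: eqP => //=.
Qed.

Lemma eidx_swapze1 (y : Idx) : eidx (swapze p p.+1 y) p = eidx y p.+1.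
Proof.
by rewrite /eidx /swapze (insub_ord Hp) (insub_ord Hp1) !ffunE /= eqxx.
Qed.
Lemma eidx_swapze2 (y : Idx) : eidx (swapze p p.+1 y) p.+1 = eidx y p.
Proof.
by rewrite /eidx /swapze (insub_ord Hp) (insub_ord Hp1) !ffunE /= eqxx neq_Sp.
Qed.
Lemma vidx_swapze1 (y : Idx) : vidx (swapze p p.+1 y) p = vidx y p.
Proof.
by rewrite /vidx /swapze (insub_ord Hp) (insub_ord Hp1) !ffunE /= eqxx.
Qed.
Lemma vidx_swapze2 (y : Idx) : vidx (swapze p p.+1 y) p.+1 = vidx y p.+1.
Proof.
by rewrite /vidx /swapze (insub_ord Hp) (insub_ord Hp1) !ffunE /= eqxx neq_Sp.
Qed.
Lemma eidx_swapv (y : Idx) r : eidx (swapv p p.+1 y) r = eidx y r.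
Proof.
rewrite /eidx /swapv; case: insubP => // u _ Hu; rewrite (insub_ord Hp) (insub_ord Hp1) !ffunE.
by do 2 case: eqP => //=.
Qed.
Lemma vidx_swape (y : Idx) r : vidx (swape p p.+1 y) r = vidx y r.
Proof.
rewrite /vidx /swape; case: insubP => // u _ Hu; rewrite (insub_ord Hp) (insub_ord Hp1) !ffunE.
by do 2 case: eqP => //=.
Qed.

Definition tyA (b : nat -> (int * 'I_L) * 'I_N) : Idx := [ffun j : 'I_n => b (j : nat)].
Definition utA (b : nat -> (int * 'I_L) * 'I_N) : Vt := fun y => if y == tyA b then 1 else 0.

Definition sh2A (i j : nat) (b : nat -> (int * 'I_L) * 'I_N) : nat -> (int * 'I_L) * 'I_N :=
  fun r => if r == p then (((b r).1.1 + i%:Z, (b r).1.2), (b r).2)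
           else if r == p.+1 then (((b r).1.1 + j%:Z, (b r).1.2), (b r).2) else b r.
Definition swzA (b : nat -> (int * 'I_L) * 'I_N) : nat -> (int * 'I_L) * 'I_N :=
  fun r => if r == p then ((b p.+1).1, (b p).2)
           else if r == p.+1 then ((b p).1, (b p.+1).2) else b r.
Definition sweA (b : nat -> (int * 'I_L) * 'I_N) : nat -> (int * 'I_L) * 'I_N :=
  fun r => if r == p then (((b p).1.1, (b p.+1).1.2), (b p).2)
           else if r == p.+1 then (((b p.+1).1.1, (b p).1.2), (b p.+1).2) else b r.
Definition swvA (b : nat -> (int * 'I_L) * 'I_N) : nat -> (int * 'I_L) * 'I_N :=
  fun r => if r == p then ((b p).1, (b p.+1).2)
           else if r == p.+1 then ((b p.+1).1, (b p).2) else b r.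

Lemma eq_inv (f g : Idx -> Idx) y t :
  (forall x, g (f x) = x) -> (forall x, f (g x) = x) -> (f y == t) = (y == g t).
Proof.
move=> K1 K2; apply/eqP/eqP => [<-|->] //.
Qed.

Definition unsh i j (y : Idx) : Idx := shiftz p (i%:Z) (shiftz p.+1 (j%:Z) y).

Lemma unshK i j y : unsh i j (sh i j y) = y.
Proof.
by rewrite /unsh /sh [shiftz p.+1 _ (shiftz p _ _)]shiftzC shiftzK shiftzK !addNr !shiftz0.
Qed.
Lemma shK i j y : sh i j (unsh i j y) = y.
Proof.
by rewrite /unsh /sh [shiftz p.+1 _ (shiftz p _ _)]shiftzC shiftzK shiftzK !addrN !shiftz0.
Qed.

Lemma unsh_ty i j b : unsh i j (tyA b) = tyA (sh2A i j b).
Proof.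
apply/ffunP => r; rewrite /unsh /sh2A !ffunE.
case: eqP => [E|_]; case: eqP => [E'|_] //=.
by move: E'; rewrite E => /eqP; rewrite neq_pS.
Qed.

Lemma utA_sh i j b y : utA b (sh i j y) = utA (sh2A i j b) y.
Proof. by rewrite /utA (@eq_inv _ (unsh i j)) ?unsh_ty // => x; rewrite ?unshK ?shK. Qed.

Lemma swapzeK (y : Idx) : swapze p p.+1 (swapze p p.+1 y) = y.
Proof.
apply/ffunP => r; rewrite /swapze (insub_ord Hp) (insub_ord Hp1) !ffunE.
by ordcase r; rewrite ?ffunE /= ?eqxx ?neq_pS ?neq_Sp //; case: (y _).
Qed.
Lemma swapeK (y : Idx) : swape p p.+1 (swape p p.+1 y) = y.
Proof.
apply/ffunP => r; rewrite /swape (insub_ord Hp) (insub_ord Hp1) !ffunE.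
by ordcase r; rewrite ?ffunE /= ?eqxx ?neq_pS ?neq_Sp //; case: (y _) => [[]].
Qed.
Lemma swapvK (y : Idx) : swapv p p.+1 (swapv p p.+1 y) = y.
Proof.
apply/ffunP => r; rewrite /swapv (insub_ord Hp) (insub_ord Hp1) !ffunE.
by ordcase r; rewrite ?ffunE /= ?eqxx ?neq_pS ?neq_Sp //; case: (y _).
Qed.

Lemma swapze_ty b : swapze p p.+1 (tyA b) = tyA (swzA b).
Proof.
apply/ffunP => r; rewrite /swapze /swzA (insub_ord Hp) (insub_ord Hp1) !ffunE.
by ordcase r.
Qed.
Lemma swape_ty b : swape p p.+1 (tyA b) = tyA (sweA b).
Proof.
apply/ffunP => r; rewrite /swape /sweA (insub_ord Hp) (insub_ord Hp1) !ffunE.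
by ordcase r.
Qed.
Lemma swapv_ty b : swapv p p.+1 (tyA b) = tyA (swvA b).
Proof.
apply/ffunP => r; rewrite /swapv /swvA (insub_ord Hp) (insub_ord Hp1) !ffunE.
by ordcase r.
Qed.

Lemma utA_swapze b (y : Idx) : utA b (swapze p p.+1 y) = utA (swzA b) y.
Proof. by rewrite /utA (@eq_inv _ (swapze p p.+1)) ?swapze_ty // => x; rewrite swapzeK. Qed.
Lemma utA_swape b (y : Idx) : utA b (swape p p.+1 y) = utA (sweA b) y.
Proof. by rewrite /utA (@eq_inv _ (swape p p.+1)) ?swape_ty // => x; rewrite swapeK. Qed.
Lemma utA_swapv b (y : Idx) : utA b (swapv p p.+1 y) = utA (swvA b) y.
Proof. by rewrite /utA (@eq_inv _ (swapv p p.+1)) ?swapv_ty // => x; rewrite swapvK. Qed.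



Definition Dm (f : Vt) : Vt := fun y => q ^+ 2 * mulz p.+1 f y - mulz p f y.
Definition LHSf (w g : Vt) : Vt :=
  fun y => mulz p (Dm (fun y => g y + w y)) y - mulz p.+1 (Dm (fun y => g y + w y)) y.
Definition Xf (w : Vt) : Vt := fun y => Dm w y - sflip p (Rop p w) y.
Definition RHSf (w : Vt) : Vt := fun y => mulz p (Xf w) y - q ^+ 2 * mulz p.+1 (Xf w) y.
Definition Erel (w g : Vt) (y : Idx) : Kf := LHSf w g y - RHSf w y.

Lemma cT_relP (w g : Vt) : cT_rel p w g <-> (forall y, Erel w g y = 0).
Proof.
split => H.
- move=> y; rewrite /Erel; have -> : LHSf w g = RHSf w by exact: H.
  by rewrite subrr.
- change (LHSf w g = RHSf w); apply: functional_extensionality => y.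
  by apply/eqP; rewrite -subr_eq0; apply/eqP; exact: H.
Qed.

Lemma shsh00 i j (y : Idx) : sh i j (sh 0 0 y) = sh i j y.
Proof. by rewrite sh00. Qed.

Lemma sh10 (y : Idx) : shiftz p (-1) y = sh 1 0 y.
Proof. by rewrite -{1}(sh00 y) shP1. Qed.
Lemma sh01 (y : Idx) : shiftz p.+1 (-1) y = sh 0 1 y.
Proof. by rewrite -{1}(sh00 y) shP2. Qed.

Ltac norm y :=
  rewrite /Erel /LHSf /RHSf /Xf /Dm /sflip /Rop /mulz /=;
  rewrite -(sh00 y);
  do ![ rewrite shP1 | rewrite shP2 | rewrite swapze_sh | rewrite swape_sh
      | rewrite eidx_sh | rewrite eidx_swapze1 | rewrite eidx_swapze2 | rewrite shsh00 ].

Lemma E_lin (w1 g1 w2 g2 : Vt) c y :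
  Erel (fun y => w1 y + c * w2 y) (fun y => g1 y + c * g2 y) y = Erel w1 g1 y + c * Erel w2 g2 y.
Proof.
norm y.
case: ltngtP => _ /=; ring.
Qed.


Definition Sop (f : Vt) : Vt := fun y => mulz p f y + mulz p.+1 f y.

Lemma E_S (w g : Vt) y :
  Erel (Sop w) (Sop g) y = Erel w g (shiftz p (-1) y) + Erel w g (shiftz p.+1 (-1) y).
Proof.
rewrite /Sop; norm y.
case: ltngtP => _ /=; ring.
Qed.

Lemma E_B (w g : Vt) y :
  Erel (mulz p w) (fun y => mulz p.+1 g y - (q ^+ 2 - 1) * mulz p.+1 w y) y =
  Erel w g (shiftz p.+1 (-1) y).
Proof.
norm y.
case: ltngtP => _ /=; ring.
Qed.


Lemma eidx_ty b : eidx (tyA b) p = ((b p).1.2 : nat).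
Proof. by rewrite /eidx (insub_ord Hp) ffunE. Qed.
Lemma eidx_ty2 b : eidx (tyA b) p.+1 = ((b p.+1).1.2 : nat).
Proof. by rewrite /eidx (insub_ord Hp1) ffunE. Qed.
Lemma vidx_ty b : vidx (tyA b) p = ((b p).2 : nat).
Proof. by rewrite /vidx (insub_ord Hp) ffunE. Qed.
Lemma vidx_ty2 b : vidx (tyA b) p.+1 = ((b p.+1).2 : nat).
Proof. by rewrite /vidx (insub_ord Hp1) ffunE. Qed.

Lemma utA_col b y : utA b y = 0 \/
  (eidx y p = ((b p).1.2 : nat) /\ eidx y p.+1 = ((b p.+1).1.2 : nat) /\
   vidx y p = ((b p).2 : nat) /\ vidx y p.+1 = ((b p.+1).2 : nat)).
Proof.
rewrite /utA; case: eqP => [->|]; last by left.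
by right; rewrite eidx_ty eidx_ty2 vidx_ty vidx_ty2.
Qed.

Lemma sweA_sh2A i j b : sweA (sh2A i j b) = sh2A i j (sweA b).
Proof.
apply: functional_extensionality => r; rewrite /sweA /sh2A /=.
by case: (eqVneq r p) => [E1|H1]; rewrite ?eqxx ?neq_pS ?neq_Sp //=; case: (eqVneq r p.+1) => [E2|H2]; rewrite ?eqxx ?neq_Sp ?(negbTE H1) ?(negbTE H2).
Qed.
Lemma swvA_sh2A i j b : swvA (sh2A i j b) = sh2A i j (swvA b).
Proof.
apply: functional_extensionality => r; rewrite /swvA /sh2A /=.
by case: (eqVneq r p) => [E1|H1]; rewrite ?eqxx ?neq_pS ?neq_Sp //=; case: (eqVneq r p.+1) => [E2|H2]; rewrite ?eqxx ?neq_Sp ?(negbTE H1) ?(negbTE H2).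
Qed.
Lemma swzA_sh2A i j b : swzA (sh2A i j b) = sh2A j i (swzA b).
Proof.
apply: functional_extensionality => r; rewrite /swzA /sh2A /=.
by case: (eqVneq r p) => [E1|H1]; rewrite ?eqxx ?neq_pS ?neq_Sp //=; case: (eqVneq r p.+1) => [E2|H2]; rewrite ?eqxx ?neq_Sp ?(negbTE H1) ?(negbTE H2).
Qed.
Lemma sh2A_sh2A i j i' j' b : sh2A i j (sh2A i' j' b) = sh2A (i' + i) (j' + j) b.
Proof.
apply: functional_extensionality => r; rewrite /sh2A /=.
case: (eqVneq r p) => [E1|H1]; rewrite ?eqxx ?neq_pS ?neq_Sp //=; last case: (eqVneq r p.+1) => [E2|H2];
  rewrite ?eqxx ?neq_Sp ?(negbTE H1) ?(negbTE H2) //=; by rewrite PoszD addrA.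
Qed.

Lemma Rop_utA a : Rop p (utA a) = fun y =>
  if ((a p).1.2 : nat) == ((a p.+1).1.2 : nat) then
    q ^+ 2 * utA (sh2A 1 0 a) y - utA (sh2A 0 1 a) y
  else q * (utA (sh2A 1 0 a) y - utA (sh2A 0 1 a) y)
       + (q ^+ 2 - 1) * (if (((a p.+1).1.2 : nat) < ((a p).1.2 : nat))%N
                         then utA (sh2A 1 0 (sweA a)) y else utA (sh2A 0 1 (sweA a)) y).
Proof.
apply: functional_extensionality => y; rewrite /Rop /mulz /=.
rewrite !sh10 !sh01 !utA_sh !utA_swape !sweA_sh2A.
have h1 := utA_col (sh2A 1 0 a) y; have h2 := utA_col (sh2A 0 1 a) y.
have h3 := utA_col (sh2A 1 0 (sweA a)) y; have h4 := utA_col (sh2A 0 1 (sweA a)) y.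
move: h1 h2 h3 h4; rewrite /sh2A /sweA !eqxx !neq_Sp /=.
rewrite -/(sh2A 1 0 a) -/(sh2A 0 1 a) -/(sweA a) -/(sh2A 1 0 (sweA a)) -/(sh2A 0 1 (sweA a)).
move: (utA (sh2A 1 0 a) y) (utA (sh2A 0 1 a) y) (utA (sh2A 1 0 (sweA a)) y) (utA (sh2A 0 1 (sweA a)) y).
move: (eidx y p) (eidx y p.+1) ((a p).1.2 : nat) ((a p.+1).1.2 : nat) => ey fy c d T1 T2 T3 T4.
case=> [->|[E1 [F1 _]]]; case=> [->|[E2 [F2 _]]]; case=> [->|[E3 [F3 _]]]; case=> [->|[E4 [F4 _]]];
  subst; rewrite ?eqxx /=;
  repeat (case: ifP => ?); try ring; exfalso; lia.
Qed.


Lemma sTop_utA a : sTop p (utA a) = fun y =>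
  if ((a p).2 : nat) == ((a p.+1).2 : nat) then q ^+ 2 * utA a y
  else q * utA (swvA a) y + (if (((a p.+1).2 : nat) < ((a p).2 : nat))%N then (q ^+ 2 - 1) * utA a y else 0).
Proof.
apply: functional_extensionality => y; rewrite /sTop /=.
rewrite !utA_swapv.
have h1 := utA_col a y; have h2 := utA_col (swvA a) y.
move: h1 h2; rewrite /swvA !eqxx !neq_Sp /=.
rewrite -/(swvA a).
move: (utA a y) (utA (swvA a) y).
move: (vidx y p) (vidx y p.+1) ((a p).2 : nat) ((a p.+1).2 : nat) => ey fy c d T1 T2.
case=> [->|[_ [_ [E1 F1]]]]; case=> [->|[_ [_ [E2 F2]]]];
  subst; rewrite ?eqxx /=;
  repeat (case: ifP => ?); try ring; exfalso; lia.
Qed.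


Lemma sweAK b : sweA (sweA b) = b.
Proof.
apply: functional_extensionality => r; rewrite /sweA /=.
case: (eqVneq r p) => [E1|H1]; rewrite ?E1 ?eqxx ?neq_pS ?neq_Sp //=; first by case: (b p) => [[]].
case: (eqVneq r p.+1) => [E2|H2]; rewrite ?E2 ?eqxx ?neq_Sp ?(negbTE H1) ?(negbTE H2) //=.
by case: (b p.+1) => [[]].
Qed.

Lemma swzA_eq b : (b p).1.1 = (b p.+1).1.1 -> swzA b = sweA b /\ swzA (sweA b) = b.
Proof.
move=> E; split; apply: functional_extensionality => r; rewrite /swzA /sweA /=;
case: (eqVneq r p) => [E1|H1]; rewrite ?E1 ?eqxx ?neq_pS ?neq_Sp //=;
try (case: (eqVneq r p.+1) => [E2|H2]; rewrite ?E2 ?eqxx ?neq_Sp ?(negbTE H1) ?(negbTE H2) //=);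
move: E; case: (b p) => [[? ?] ?]; case: (b p.+1) => [[? ?] ?] /= ->//.
Qed.

Lemma sweA_id (b : nat -> (int * 'I_L) * 'I_N) : ((b p).1.2 : nat) = ((b p.+1).1.2 : nat) -> sweA b = b.
Proof.
move=> /val_inj E; apply: functional_extensionality => r; rewrite /sweA /=.
case: (eqVneq r p) => [E1|H1]; rewrite ?E1 ?eqxx ?neq_pS ?neq_Sp //=.
  by rewrite -E; case: (b p) => [[]].
case: (eqVneq r p.+1) => [E2|H2]; rewrite ?E2 ?eqxx ?neq_Sp ?(negbTE H1) ?(negbTE H2) //=.
by rewrite E; case: (b p.+1) => [[]].
Qed.

Definition cT0 (a : nat -> (int * 'I_L) * 'I_N) : Vt := fun y =>
  let c := ((a p).1.2 : nat) in let d := ((a p.+1).1.2 : nat) in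
  if c == d then - utA a y
  else if (c < d)%N then (q ^+ 2 - 1) * utA a y - q * utA (sweA a) y
  else - (q * utA (sweA a) y).

Lemma cT_base a : (a p).1.1 = (a p.+1).1.1 -> cT_rel p (utA a) (cT0 a).
Proof.
move=> E; have [Z1 Z2] := swzA_eq E.
apply/cT_relP => y.
rewrite /Erel /LHSf /RHSf /Xf /Dm /sflip Rop_utA /mulz /cT0 /=.
rewrite -(sh00 y).
do ![ rewrite shP1 | rewrite shP2 | rewrite swapze_sh | rewrite swape_sh | rewrite shsh00
    | rewrite utA_sh | rewrite utA_swapze | rewrite sh2A_sh2A | rewrite swzA_sh2A | rewrite Z1
    | rewrite Z2 | rewrite sweA_sh2A | rewrite sweAK ].
rewrite ?addSn ?add0n ?addn0.
case: ltngtP => H /=; try ring.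
rewrite (sweA_id H); ring.
Qed.


Lemma cT_lin (w1 g1 w2 g2 : Vt) c : cT_rel p w1 g1 -> cT_rel p w2 g2 ->
  cT_rel p (fun y => w1 y + c * w2 y) (fun y => g1 y + c * g2 y).
Proof. move=> /cT_relP H1 /cT_relP H2; apply/cT_relP => y; by rewrite E_lin H1 H2 mulr0 addr0. Qed.

Lemma cT_S (w g : Vt) : cT_rel p w g -> cT_rel p (Sop w) (Sop g).
Proof. move=> /cT_relP H; apply/cT_relP => y; by rewrite E_S !H addr0. Qed.

Lemma cT_B (w g : Vt) : cT_rel p w g ->
  cT_rel p (mulz p w) (fun y => mulz p.+1 g y - (q ^+ 2 - 1) * mulz p.+1 w y).
Proof. move=> /cT_relP H; apply/cT_relP => y; by rewrite E_B H. Qed.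

Lemma shiftzKV r (y : Idx) : shiftz r 1 (shiftz r (-1) y) = y.
Proof. by rewrite shiftzK addNr shiftz0. Qed.

Lemma finsupp_utA b : finsupp (utA b).
Proof. by exists [:: tyA b] => y; rewrite inE /utA => /negbTE ->. Qed.

Lemma finsupp_lin (f1 f2 : Vt) c : finsupp f1 -> finsupp f2 -> finsupp (fun y => f1 y + c * f2 y).
Proof.
move=> [s1 H1] [s2 H2]; exists (s1 ++ s2) => y; rewrite mem_cat negb_or => /andP[/H1 -> /H2 ->].
by rewrite mulr0 addr0.
Qed.

Lemma finsupp_add (f1 f2 : Vt) : finsupp f1 -> finsupp f2 -> finsupp (fun y => f1 y + f2 y).
Proof.
move=> [s1 H1] [s2 H2]; exists (s1 ++ s2) => y; rewrite mem_cat negb_or => /andP[/H1 -> /H2 ->].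
by rewrite addr0.
Qed.

Lemma finsupp_mulz r (f : Vt) : finsupp f -> finsupp (mulz r f).
Proof.
move=> [s H]; exists (map (shiftz r 1) s) => y Hy; rewrite /mulz; apply: H.
apply: contra Hy => Hs; by rewrite -(shiftzKV r y) map_f.
Qed.

Lemma sTop_lin (w1 w2 : Vt) c y : sTop p (fun y => w1 y + c * w2 y) y = sTop p w1 y + c * sTop p w2 y.
Proof. rewrite /sTop /=; case: ifP => _; try case: ifP => _; ring. Qed.

Lemma sTop_S (w : Vt) y : sTop p (Sop w) y = Sop (sTop p w) y.
Proof.
rewrite /sTop /Sop /mulz /= -(sh00 y).
do ![ rewrite shP1 | rewrite shP2 | rewrite swapv_sh | rewrite vidx_sh | rewrite shsh00 ].
by case: ifP => _; try case: ifP => _; ring.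
Qed.

Definition relp (x : Vt) := exists w g, [/\ finsupp w, finsupp g, cT_rel p w g & x = fun y => g y - sTop p w y].

Lemma relp_lin x1 x2 c : relp x1 -> relp x2 -> relp (fun y => x1 y + c * x2 y).
Proof.
move=> [w1 [g1 [F1 G1 C1 ->]]] [w2 [g2 [F2 G2 C2 ->]]].
exists (fun y => w1 y + c * w2 y), (fun y => g1 y + c * g2 y); split.
- exact: finsupp_lin. - exact: finsupp_lin. - exact: cT_lin.
apply: functional_extensionality => y; rewrite sTop_lin; ring.
Qed.

Lemma relp_S x : relp x -> relp (Sop x).
Proof.
move=> [w [g [F G C ->]]].
exists (Sop w), (Sop g); split.
- by apply: finsupp_add; apply: finsupp_mulz.
- by apply: finsupp_add; apply: finsupp_mulz.
- exact: cT_S.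
apply: functional_extensionality => y; rewrite sTop_S /Sop /mulz; ring.
Qed.

Lemma relp_ext x x' : relp x -> (forall y, x y = x' y) -> relp x'.
Proof. by move=> H E; have <- : x = x' by apply: functional_extensionality. Qed.



Lemma cT_rel0 r : cT_rel r (fun _ : Idx => 0) (fun _ : Idx => 0).
Proof.
have R0 : Rop r (fun _ : Idx => 0) = fun _ => 0.
  apply: functional_extensionality => y.
  rewrite /Rop /mulz /=; case: ifP => _; try case: ifP => _; ring.
rewrite /cT_rel R0; apply: functional_extensionality => y.
rewrite /sflip /mulz /=; ring.
Qed.

Lemma finsupp0 : finsupp (fun _ : Idx => 0).
Proof. by exists [::]. Qed.

Lemma sTop0 r y : sTop r (fun _ : Idx => 0) y = 0.
Proof. rewrite /sTop; case: ifP => _; try case: ifP => _; ring. Qed.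

Lemma relp_in x : relp x -> in_relations x.
Proof.
move=> [w [g [F G C ->]]].
exists (fun r => if r == p then w else fun _ => 0), (fun r => if r == p then g else fun _ => 0); split.
  move=> r _; case: eqP => [->|_]; split => //; [exact: finsupp0 | exact: finsupp0 | exact: cT_rel0].
apply: functional_extensionality => y.
have Hpn : (p < n.-1)%N by case: (n) Hp1.
rewrite (bigD1 (Ordinal Hpn)) //= eqxx big1 ?addr0 // => i /eqP Hi.
case: eqP => [Ei|_]; first by case: Hi; apply: val_inj.
by rewrite sTop0 subrr.
Qed.

Lemma utA0 b y : y != tyA b -> utA b y = 0.
Proof. by rewrite /utA => /negbTE ->. Qed.

Lemma relp0 : relp (fun _ => 0).
Proof.
exists (fun _ => 0), (fun _ => 0); split; [exact: finsupp0|exact: finsupp0|exact: cT_rel0|].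
by apply: functional_extensionality => y; rewrite sTop0 subrr.
Qed.

Lemma relp_scale x c : relp x -> relp (fun y => c * x y).
Proof. move=> H; apply: relp_ext (relp_lin c relp0 H) _ => y; ring. Qed.

Lemma mulz_utA b : mulz p (utA b) = utA (sh2A 1 0 b).
Proof. by apply: functional_extensionality => y; rewrite /mulz sh10 utA_sh. Qed.
Lemma mulz1_utA b : mulz p.+1 (utA b) = utA (sh2A 0 1 b).
Proof. by apply: functional_extensionality => y; rewrite /mulz sh01 utA_sh. Qed.

Definition G1 (b : nat -> Atom) : Vt := fun y =>
  cT0 (sh2A 0 1 b) y - (q ^+ 2 - 1) * utA (sh2A 0 1 b) y.

Lemma relp_base0 b : (b p).1.1 = (b p.+1).1.1 ->
  relp (fun y => cT0 b y - sTop p (utA b) y).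
Proof.
move=> E; exists (utA b), (cT0 b); split => //; [exact: finsupp_utA | | exact: cT_base].
exists [:: tyA b; tyA (sweA b)] => y; rewrite !inE negb_or => /andP[H1 H2].
by rewrite /cT0 !utA0 //=; case: ifP => _; try case: ifP => _; ring.
Qed.

Lemma relp_base1 b : (b p).1.1 = (b p.+1).1.1 ->
  relp (fun y => G1 b y - sTop p (utA (sh2A 1 0 b)) y).
Proof.
move=> E; exists (utA (sh2A 1 0 b)), (G1 b); split => //; [exact: finsupp_utA | |].
  exists [:: tyA (sh2A 0 1 b); tyA (sh2A 0 1 (sweA b))] => y; rewrite !inE negb_or => /andP[H1 H2].
  by rewrite /G1 /cT0 !utA0 // ?sweA_sh2A //=; case: ifP => _; try case: ifP => _; ring.
rewrite -mulz_utA.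
have -> : G1 b = fun y => mulz p.+1 (cT0 b) y - (q ^+ 2 - 1) * mulz p.+1 (utA b) y.
  apply: functional_extensionality => y; rewrite mulz1_utA /G1 /cT0 /mulz sh01 !utA_sh sweA_sh2A /=.
  by rewrite /sh2A !eqxx !neq_Sp /=.
exact/cT_B/cT_base.
Qed.

Definition NL : int := N%:Z * L%:Z.
Definition shx (i : int) (X : Atom) : Atom := ((X.1.1 + i, X.1.2), X.2).
Lemma NL_gt0 : 0 < NL.
Proof. by rewrite /NL mulr_gt0 // ltz_nat. Qed.

Lemma kof_shx i X : kof (shx i X) = kof X - NL * i.
Proof. rewrite /kof /shx /NL /=; ring. Qed.
Lemma atom_subNL t : atom (t - NL) = shx 1 (atom t).
Proof. by rewrite -[RHS]atomK kof_shx kofK mulr1. Qed.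

Definition utk (k : nat -> int) : Vt := utA (fun r => atom (k r)).
Definition mkA (k : nat -> int) (X Y : Atom) : nat -> Atom :=
  fun r => if r == p then X else if r == p.+1 then Y else atom (k r).
Definition upd2 (k : nat -> int) (a b : int) : nat -> int :=
  fun r => if r == p then a else if r == p.+1 then b else k r.

Lemma utk_upd2 k a b : utk (upd2 k a b) = utA (mkA k (atom a) (atom b)).
Proof.
congr utA; apply: functional_extensionality => r; rewrite /mkA /upd2.
by case: (r == p) => //; case: (r == p.+1).
Qed.
Lemma upd2_id k : upd2 k (k p) (k p.+1) = k.
Proof.
apply: functional_extensionality => r; rewrite /upd2.
case: (eqVneq r p) => [E|_]; first by rewrite E.
by case: (eqVneq r p.+1) => [E|_] //; rewrite E.
Qed.
Lemma upd2_upd2 k a b a' b' : upd2 (upd2 k a b) a' b' = upd2 k a' b'.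
Proof.
apply: functional_extensionality => r; rewrite /upd2.
by case: (r == p) => //; case: (r == p.+1).
Qed.
Lemma utk_k k : utk k = utA (mkA k (atom (k p)) (atom (k p.+1))).
Proof. by rewrite -utk_upd2 upd2_id. Qed.

Lemma sh2A_mkA i j k X Y : sh2A i j (mkA k X Y) = mkA k (shx i%:Z X) (shx j%:Z Y).
Proof.
apply: functional_extensionality => r; rewrite /sh2A /mkA /=.
case: (eqVneq r p) => [E1|H1]; rewrite ?E1 ?eqxx ?neq_pS ?neq_Sp //=.
case: (eqVneq r p.+1) => [E2|H2]; rewrite ?E2 ?eqxx ?neq_Sp ?(negbTE H1) ?(negbTE H2) //=.
Qed.
Lemma sweA_mkA k X Y : sweA (mkA k X Y) = mkA k ((X.1.1, Y.1.2), X.2) ((Y.1.1, X.1.2), Y.2).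
Proof.
apply: functional_extensionality => r; rewrite /sweA /mkA /=.
case: (eqVneq r p) => [E1|H1]; rewrite ?E1 ?eqxx ?neq_pS ?neq_Sp //=.
case: (eqVneq r p.+1) => [E2|H2]; rewrite ?E2 ?eqxx ?neq_Sp ?(negbTE H1) ?(negbTE H2) //=.
Qed.
Lemma swvA_mkA k X Y : swvA (mkA k X Y) = mkA k (X.1, Y.2) (Y.1, X.2).
Proof.
apply: functional_extensionality => r; rewrite /swvA /mkA /=.
case: (eqVneq r p) => [E1|H1]; rewrite ?E1 ?eqxx ?neq_pS ?neq_Sp //=.
case: (eqVneq r p.+1) => [E2|H2]; rewrite ?E2 ?eqxx ?neq_Sp ?(negbTE H1) ?(negbTE H2) //=.
Qed.
Lemma mkA_p k X Y : mkA k X Y p = X. Proof. by rewrite /mkA eqxx. Qed.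
Lemma mkA_p1 k X Y : mkA k X Y p.+1 = Y. Proof. by rewrite /mkA eqxx neq_Sp. Qed.
Lemma mkA_upd2 k a b X Y : mkA (upd2 k a b) X Y = mkA k X Y.
Proof.
apply: functional_extensionality => r; rewrite /mkA /upd2.
by case: (r == p) => //; case: (r == p.+1).
Qed.

Lemma mulz_utk k a b : mulz p (utk (upd2 k a b)) = utk (upd2 k (a - NL) b).
Proof.
rewrite !utk_upd2 mulz_utA sh2A_mkA atom_subNL; congr (utA (mkA _ _ _)).
by rewrite /shx; case: (atom b) => [[? ?] ?] /=; rewrite addr0.
Qed.
Lemma mulz1_utk k a b : mulz p.+1 (utk (upd2 k a b)) = utk (upd2 k a (b - NL)).
Proof.
rewrite !utk_upd2 mulz1_utA sh2A_mkA atom_subNL; congr (utA (mkA _ _ _)).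
by rewrite /shx; case: (atom a) => [[? ?] ?] /=; rewrite addr0.
Qed.

Definition inG (l m : int) (k : nat -> int) (x : Vt) :=
  exists s : seq (Kf * int), all (fun t => (t.1 == 0) || ((l < t.2) && (t.2 <= m))) s /\
    (forall y, x y = \sum_(t <- s) t.1 * utk (upd2 k t.2 (l + m - t.2)) y).
Definition RG (l m : int) (k : nat -> int) (x : Vt) :=
  exists z, inG l m k z /\ relp (fun y => x y - z y).

Lemma inG0 l m k : inG l m k (fun _ => 0).
Proof. by exists [::]; split => // y; rewrite big_nil. Qed.

Lemma inG_lin l m k z1 z2 c : inG l m k z1 -> inG l m k z2 -> inG l m k (fun y => z1 y + c * z2 y).
Proof.
move=> [s1 [A1 E1]] [s2 [A2 E2]].
exists (s1 ++ map (fun t => (c * t.1, t.2)) s2); split.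
  rewrite all_cat A1 /= all_map; apply: sub_all A2 => t /=.
  by case/orP => [/eqP ->|->]; rewrite ?mulr0 ?eqxx ?orbT.
move=> y; rewrite E1 E2 big_cat big_map /= mulr_sumr; congr (_ + _).
by apply: eq_bigr => t _; rewrite mulrA.
Qed.

Lemma inG_term l m k t : l < t <= m -> inG l m k (utk (upd2 k t (l + m - t))).
Proof. move=> H; exists [:: (1, t)]; split => [|y]; by rewrite /= ?H ?orbT // big_seq1 mul1r. Qed.

Lemma inG_ext l m k z z' : inG l m k z -> (forall y, z y = z' y) -> inG l m k z'.
Proof. by move=> [s [A E]] H; exists s; split => // y; rewrite -H. Qed.

Lemma inG_mono l m l' m' k z : l <= l' -> m' <= m -> l' + m' = l + m -> inG l' m' k z -> inG l m k z.
Proof.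
move=> H1 H2 H3 [s [A E]]; exists s; split; last by move=> y; rewrite E H3.
apply: sub_all A => t /=; case/orP => [->//|/andP [Ha Hb]].
by apply/orP; right; apply/andP; split; [exact: le_lt_trans Ha | exact: le_trans H2].
Qed.

Lemma inG_upd l m k a b z : inG l m (upd2 k a b) z -> inG l m k z.
Proof. by move=> [s [A E]]; exists s; split => // y; rewrite E; apply: eq_bigr => t _; rewrite upd2_upd2. Qed.

Lemma inG_S l m k z : inG (l + NL) m k z -> inG l m k (Sop z).
Proof.
move=> [s [A E]].
exists (map (fun t => (t.1, t.2 - NL)) s ++ s); split.
  rewrite all_cat all_map; apply/andP; split; apply: sub_all A => t /=;
  case/orP => [->//|/andP [Ha Hb]]; rewrite ?orbT //;
  apply/orP; right; apply/andP; split; have := NL_gt0; lia.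
move=> y; rewrite /Sop /mulz !E big_cat big_map /= -!big_split /=.
apply: eq_bigr => t _.
have := equal_f (mulz_utk k t.2 (l + NL + m - t.2)) y; rewrite /mulz => ->.
have := equal_f (mulz1_utk k t.2 (l + NL + m - t.2)) y; rewrite /mulz => ->.
have -> : l + NL + m - t.2 = l + m - (t.2 - NL) by ring.
by have -> : l + m - (t.2 - NL) - NL = l + m - t.2 by ring.
Qed.

Lemma RG_lin l m k x1 x2 c : RG l m k x1 -> RG l m k x2 -> RG l m k (fun y => x1 y + c * x2 y).
Proof.
move=> [z1 [G1 R1]] [z2 [G2 R2]]; exists (fun y => z1 y + c * z2 y); split; first exact: inG_lin.
by apply: relp_ext (relp_lin c R1 R2) _ => y; ring.
Qed.
Lemma RG_ext l m k x x' : RG l m k x -> (forall y, x y = x' y) -> RG l m k x'.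
Proof. by move=> [z [G R]] H; exists z; split => //; apply: relp_ext R _ => y; rewrite H. Qed.
Lemma RG_inG l m k z : inG l m k z -> RG l m k z.
Proof. by move=> G; exists z; split => //; apply: relp_ext relp0 _ => y; rewrite subrr. Qed.
Lemma RG_relp l m k x : relp x -> RG l m k x.
Proof. by move=> R; exists (fun _ => 0); split; [exact: inG0 | apply: relp_ext R _ => y; rewrite subr0]. Qed.
Lemma RG_S l m k x : RG (l + NL) m k x -> RG l m k (Sop x).
Proof.
move=> [z [G R]]; exists (Sop z); split; first exact: inG_S.
by apply: relp_ext (relp_S R) _ => y; rewrite /Sop /mulz; ring.
Qed.
Lemma RG_mono l m l' m' k x : l <= l' -> m' <= m -> l' + m' = l + m -> RG l' m' k x -> RG l m k x.
Proof. by move=> H1 H2 H3 [z [G R]]; exists z; split => //; exact: inG_mono G. Qed.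
Lemma RG_upd l m k a b x : RG l m (upd2 k a b) x -> RG l m k x.
Proof. by move=> [z [G R]]; exists z; split => //; exact: inG_upd G. Qed.

Lemma relp_diag k : k p = k p.+1 -> relp (utk k).
Proof.
move=> H; set b := fun r => atom (k r).
have E : b p = b p.+1 by rewrite /b H.
have R := relp_base0 (congr1 (fun x : Atom => x.1.1) E).
apply: relp_ext (relp_scale (- (1 + q ^+ 2)^-1) R) _ => y.
rewrite sTop_utA /cT0 E !eqxx /= /utk -/b.
have h := q2p1_neq0 HN.
have -> : - utA b y - q ^+ 2 * utA b y = - ((1 + q ^+ 2) * utA b y) by ring.
by rewrite mulrN mulNr opprK mulrA mulVf // mul1r.
Qed.

Lemma solveO (c1 O S R Sg : Kf) : c1 != 0 -> R = S - c1 * O -> Sg = c1^-1 * S -> O = Sg + (- c1^-1) * R.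
Proof.
move=> h -> ->.
have E : c1^-1 * (c1 * O) = O by rewrite mulrA mulVf // mul1r.
rewrite mulrBr mulNr mulNr opprK E; ring.
Qed.

Lemma utA_mkA_utk k l m P Q : kof P + kof Q = l + m ->
  utA (mkA k P Q) = utk (upd2 k (kof P) (l + m - kof P)).
Proof.
move=> H; rewrite utk_upd2 atomK.
have -> : l + m - kof P = kof Q by rewrite -H; ring.
by rewrite atomK.
Qed.

Lemma RG_from l m k (orig r : Vt) (s : seq (Kf * int)) c : relp r ->
  all (fun t => (t.1 == 0) || ((l < t.2) && (t.2 <= m))) s ->
  (forall y, orig y = \sum_(t <- s) t.1 * utk (upd2 k t.2 (l + m - t.2)) y + c * r y) ->
  RG l m k orig.
Proof.
move=> R A E.
exists (fun y => \sum_(t <- s) t.1 * utk (upd2 k t.2 (l + m - t.2)) y); split.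
  by exists s.
by apply: relp_ext (relp_scale c R) _ => y; rewrite E; ring.
Qed.

Lemma RG_solve l m k (orig r : Vt) (c1 : Kf) (ts : seq (Kf * Atom * Atom)) :
  c1 != 0 -> relp r ->
  all (fun t => (l < kof t.1.2 <= m) && (kof t.1.2 + kof t.2 == l + m)) ts ->
  (forall y, r y = \sum_(t <- ts) t.1.1 * utA (mkA k t.1.2 t.2) y - c1 * orig y) ->
  RG l m k orig.
Proof.
move=> h R A E.
apply: (RG_from (s := map (fun t => (c1^-1 * t.1.1, kof t.1.2)) ts) (c := - c1^-1) R).
  rewrite all_map; apply: sub_all A => t /= /andP[-> _]; by rewrite orbT.
move=> y; apply: solveO h (E y) _.
rewrite big_map mulr_sumr; apply: eq_big_seq => t Ht /=.
have /andP[_ /eqP Hs] := allP A t Ht.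
by rewrite -(utA_mkA_utk _ Hs) mulrA.
Qed.

Lemma arith (N' L' E C D : int) : 0 < N' -> 0 < L' -> - N' < E < N' -> - L' < C < L' ->
  0 < E + N' * C + N' * L' * D < N' * L' ->
  (D = 0 /\ 0 <= C /\ (C = 0 -> 0 < E)) \/ (D = 1 /\ C <= 0 /\ (C = 0 -> E < 0)).
Proof.
move=> HN' HL' /andP[E1 E2] /andP[C1 C2] /andP[S1 S2].
have HNL : 0 < N' * L' by rewrite mulr_gt0.
have HC1 : N' * C <= N' * (L' - 1) by rewrite ler_pM2l //; lia.
have HC2 : N' * (- (L' - 1)) <= N' * C by rewrite ler_pM2l //; lia.
rewrite mulrN mulrBr mulr1 in HC2; rewrite mulrBr mulr1 in HC1.
have HD0 : 0 <= D.
  case: (lerP 0 D) => // HD; exfalso.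
  have : N' * L' * D <= N' * L' * (-1) by rewrite ler_pM2l //; lia.
  lia.
have HD1 : D <= 1.
  case: (lerP D 1) => // HD; exfalso.
  have : N' * L' * 2 <= N' * L' * D by rewrite ler_pM2l //; lia.
  lia.
have HN1 : N' <= N' * C \/ N' * C <= - N' \/ C = 0.
  case: (ltrgtP C 0) => HC; [right; left | left | by right; right].
    have : N' * C <= N' * (-1) by rewrite ler_pM2l //; lia.
    lia.
  have : N' * 1 <= N' * C by rewrite ler_pM2l //; lia.
  lia.
have [HD|HD] : D = 0 \/ D = 1 by lia.
- left; subst D; rewrite mulr0 addr0 in S1 S2; split => //; split.
    case: HN1 => [|[|->]]; lia.
  by move=> HC0; rewrite HC0 mulr0 in S1; lia.
- right; subst D; rewrite mulr1 in S1 S2; split => //; split.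
    case: HN1 => [|[|->]]; lia.
  by move=> HC0; rewrite HC0 mulr0 in S2; lia.
Qed.

Lemma base_k k l m : k p = l -> k p.+1 = m -> 0 < m - l < NL -> RG l m k (utk k).
Proof.
move=> Hl Hm /andP[Hb1 Hb2].
case Ex: (atom l) => [[al cl] el]; case Ey: (atom m) => [[be cm] em].
have El : l = kof ((al, cl), el) by rewrite -Ex kofK.
have Em : m = kof ((be, cm), em) by rewrite -Ey kofK.
have Horig : utk k = utA (mkA k ((al, cl), el) ((be, cm), em)) by rewrite utk_k Hl Hm Ex Ey.
rewrite Horig.
have hcl := ltn_ord cl; have hcm := ltn_ord cm; have hel := ltn_ord el; have hem := ltn_ord em.
have hq : q != 0 := q_neq0 N.
have hq2 : q ^+ 2 != 0 by rewrite expf_neq0.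
have key : m - l = ((em : nat)%:Z - (el : nat)%:Z) + N%:Z * ((cl : nat)%:Z - (cm : nat)%:Z)
                   + N%:Z * L%:Z * (al - be) by rewrite El Em /kof /=; ring.
have A1 : 0 < N%:Z by rewrite ltz_nat.
have A2 : 0 < L%:Z by rewrite ltz_nat.
have A3 : - N%:Z < (em : nat)%:Z - (el : nat)%:Z < N%:Z by apply/andP; split; lia.
have A4 : - L%:Z < (cl : nat)%:Z - (cm : nat)%:Z < L%:Z by apply/andP; split; lia.
have A5 : 0 < ((em : nat)%:Z - (el : nat)%:Z) + N%:Z * ((cl : nat)%:Z - (cm : nat)%:Z)
                   + N%:Z * L%:Z * (al - be) < N%:Z * L%:Z.
  by rewrite -key; apply/andP; split; rewrite // -/NL.
have Kl : l = (el : nat)%:Z + 1 - N%:Z * ((cl : nat)%:Z + 1) - N%:Z * L%:Z * al by rewrite El /kof /=; ring.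
have Km : m = (em : nat)%:Z + 1 - N%:Z * ((cm : nat)%:Z + 1) - N%:Z * L%:Z * be by rewrite Em /kof /=; ring.
have KP : forall (u : int) (c : 'I_L) (e : 'I_N),
  kof ((u, c), e) = (e : nat)%:Z + 1 - N%:Z * ((c : nat)%:Z + 1) - N%:Z * L%:Z * u.
  by move=> u c e; rewrite /kof /=; ring.
have mono : forall a b : int, a <= b -> N%:Z * a <= N%:Z * b by move=> a b h; rewrite ler_pM2l.
have m1 := mono ((cm : nat)%:Z + 1) ((cl : nat)%:Z + 1).
have m2 := mono ((cl : nat)%:Z + 1) ((cm : nat)%:Z + 1).
have m3 : N%:Z * ((cm : nat)%:Z + 1) + N%:Z <= N%:Z * ((cl : nat)%:Z + 1) \/ N%:Z * ((cl : nat)%:Z + 1) <= N%:Z * ((cm : nat)%:Z + 1).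
  case: (lerP (cl : nat)%:Z (cm : nat)%:Z) => h; [right; apply: mono; lia | left].
  have := mono ((cm : nat)%:Z + 1 + 1) ((cl : nat)%:Z + 1); rewrite mulrDr mulr1; apply; lia.
have m4 : N%:Z * ((cm : nat)%:Z + 1) <= N%:Z * ((cl : nat)%:Z + 1) + N%:Z * L%:Z - N%:Z.
  have := mono ((cm : nat)%:Z + 1) ((cl : nat)%:Z + 1 + L%:Z - 1).
  rewrite !mulrDr mulrN mulr1 => -> //; lia.
have m5 : N%:Z * ((cl : nat)%:Z + 1) <= N%:Z * ((cm : nat)%:Z + 1) + N%:Z * L%:Z - N%:Z.
  have := mono ((cl : nat)%:Z + 1) ((cm : nat)%:Z + 1 + L%:Z - 1).
  rewrite !mulrDr mulrN mulr1 => -> //; lia.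
have hq2' : q ^+ 2 != 0 by rewrite expf_neq0.
case: (arith A1 A2 A3 A4 A5) => [[HD [HC HCE]]|[HD [HC HCE]]].
-
  have Hal : al = be by lia.
  subst al.
  case: (ltngtP (cl : nat) (cm : nat)) => Hc.
  + exfalso; lia.
  + case: (ltngtP (el : nat) (em : nat)) => He.
    * have E0 : ((mkA k ((be, cl), em) ((be, cm), el)) p).1.1 = ((mkA k ((be, cl), em) ((be, cm), el)) p.+1).1.1
        by rewrite mkA_p mkA_p1.
      have R := relp_base0 E0.
      apply: (RG_solve (c1 := q) (ts := [:: (- q, ((be, cm), em), ((be, cl), el));
                                          (- (q ^+ 2 - 1), ((be, cl), em), ((be, cm), el))]) hq R).
        rewrite /= !andbT !KP; lia.
      move=> y; rewrite /cT0 sTop_utA sweA_mkA swvA_mkA !mkA_p !mkA_p1 /= !big_cons big_nil /=.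
      repeat (case: ifP => ?); try ring; exfalso; lia.
    * have E0 : ((mkA k ((be, cl), em) ((be, cm), el)) p).1.1 = ((mkA k ((be, cl), em) ((be, cm), el)) p.+1).1.1
        by rewrite mkA_p mkA_p1.
      have R := relp_base0 E0.
      apply: (RG_solve (c1 := q) (ts := [:: (- q, ((be, cm), em), ((be, cl), el))]) hq R).
        rewrite /= !andbT !KP; lia.
      move=> y; rewrite /cT0 sTop_utA sweA_mkA swvA_mkA !mkA_p !mkA_p1 /= !big_cons big_nil /=.
      repeat (case: ifP => ?); try ring; exfalso; lia.
    * have Hee : el = em by apply: ord_inj; lia.
      subst el.
      have E0 : ((mkA k ((be, cl), em) ((be, cm), em)) p).1.1 = ((mkA k ((be, cl), em) ((be, cm), em)) p.+1).1.1
        by rewrite mkA_p mkA_p1.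
      have R := relp_base0 E0.
      apply: (RG_solve (c1 := q ^+ 2) (ts := [:: (- q, ((be, cm), em), ((be, cl), em))]) hq2' R).
        rewrite /= !andbT !KP; lia.
      move=> y; rewrite /cT0 sTop_utA sweA_mkA swvA_mkA !mkA_p !mkA_p1 /= !big_cons big_nil /=.
      repeat (case: ifP => ?); try ring; exfalso; lia.
  + have Hcc : cl = cm by apply: ord_inj; lia.
    subst cl.
    have E0 : ((mkA k ((be, cm), em) ((be, cm), el)) p).1.1 = ((mkA k ((be, cm), em) ((be, cm), el)) p.+1).1.1
      by rewrite mkA_p mkA_p1.
    have R := relp_base0 E0.
    apply: (RG_solve (c1 := q) (ts := [:: (- q ^+ 2, ((be, cm), em), ((be, cm), el))]) hq R).
      rewrite /= !andbT !KP; lia.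
    move=> y; rewrite /cT0 sTop_utA sweA_mkA swvA_mkA !mkA_p !mkA_p1 /= !big_cons big_nil /=.
    repeat (case: ifP => ?); try ring; exfalso; lia.
-
  have Hal : al = be + 1%:Z by lia.
  subst al.
  case: (ltngtP (cl : nat) (cm : nat)) => Hc.
  + case: (ltngtP (el : nat) (em : nat)) => He.
    * have E0 : ((mkA k ((be, cl), em) ((be, cm), el)) p).1.1 = ((mkA k ((be, cl), em) ((be, cm), el)) p.+1).1.1
        by rewrite mkA_p mkA_p1.
      have R := relp_base1 E0.
      apply: (RG_solve (c1 := q) (ts := [:: (- q, ((be, cm), em), ((be + 1%:Z, cl), el));
                                          (- (q ^+ 2 - 1), ((be + 1%:Z, cl), em), ((be, cm), el))]) hq R).
        rewrite /= !andbT !KP; lia.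
      move=> y; rewrite /G1 /cT0 sTop_utA !sh2A_mkA !sweA_mkA !swvA_mkA !mkA_p !mkA_p1 /shx /= !big_cons big_nil /= ?addr0.
      repeat (case: ifP => ?); try ring; exfalso; lia.
    * have E0 : ((mkA k ((be, cl), em) ((be, cm), el)) p).1.1 = ((mkA k ((be, cl), em) ((be, cm), el)) p.+1).1.1
        by rewrite mkA_p mkA_p1.
      have R := relp_base1 E0.
      apply: (RG_solve (c1 := q) (ts := [:: (- q, ((be, cm), em), ((be + 1%:Z, cl), el))]) hq R).
        rewrite /= !andbT !KP; lia.
      move=> y; rewrite /G1 /cT0 sTop_utA !sh2A_mkA !sweA_mkA !swvA_mkA !mkA_p !mkA_p1 /shx /= !big_cons big_nil /= ?addr0.
      repeat (case: ifP => ?); try ring; exfalso; lia.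
    * have Hee : el = em by apply: ord_inj; lia.
      subst el.
      have E0 : ((mkA k ((be, cl), em) ((be, cm), em)) p).1.1 = ((mkA k ((be, cl), em) ((be, cm), em)) p.+1).1.1
        by rewrite mkA_p mkA_p1.
      have R := relp_base1 E0.
      apply: (RG_solve (c1 := q ^+ 2) (ts := [:: (- q, ((be, cm), em), ((be + 1%:Z, cl), em))]) hq2' R).
        rewrite /= !andbT !KP; lia.
      move=> y; rewrite /G1 /cT0 sTop_utA !sh2A_mkA !sweA_mkA !swvA_mkA !mkA_p !mkA_p1 /shx /= !big_cons big_nil /= ?addr0.
      repeat (case: ifP => ?); try ring; exfalso; lia.
  + exfalso; lia.
  + have Hcc : cl = cm by apply: ord_inj; lia.
    subst cl.
    have E0 : ((mkA k ((be, cm), em) ((be, cm), el)) p).1.1 = ((mkA k ((be, cm), em) ((be, cm), el)) p.+1).1.1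
      by rewrite mkA_p mkA_p1.
    have R := relp_base1 E0.
    apply: (RG_solve (c1 := q) (ts := [:: (- q ^+ 2, ((be, cm), em), ((be + 1%:Z, cm), el))]) hq R).
      rewrite /= !andbT !KP; lia.
    move=> y; rewrite /G1 /cT0 sTop_utA !sh2A_mkA !sweA_mkA !swvA_mkA !mkA_p !mkA_p1 /shx /= !big_cons big_nil /= ?addr0.
    repeat (case: ifP => ?); try ring; exfalso; lia.
Qed.

Lemma LB (d : nat) : forall k l m, k p = l -> k p.+1 = m -> l < m -> (`|m - l| <= d)%N ->
  RG l m k (utk k).
Proof.
have NLp := NL_gt0.
elim: d => [|d IH] k l m Hl Hm Hlm Hd; first by exfalso; lia.
case: (ltrgtP (m - l) NL) => Hc.
- by apply: base_k => //; apply/andP; split; lia.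
-
  set k' := upd2 k (l + NL) m.
  have E : forall y, utk k y = Sop (utk k') y + (-1) * utk (upd2 k (l + NL) (m - NL)) y.
    move=> y; rewrite /Sop /k' mulz_utk mulz1_utk.
    have -> : l + NL - NL = l by ring.
    rewrite -Hl -Hm upd2_id; ring.
  apply: RG_ext (RG_lin (-1) _ _) (fun y => esym (E y)).
    apply: RG_S; apply: (@RG_upd _ _ _ (l + NL) m).
    by apply: IH; rewrite /k' /upd2 ?eqxx ?neq_Sp //; lia.
  case: (ltrgtP (l + NL) (m - NL)) => Hc2.
  + apply: (@RG_mono _ _ (l + NL) (m - NL)); try lia.
    apply: (@RG_upd _ _ _ (l + NL) (m - NL)).
    by apply: IH; rewrite /upd2 ?eqxx ?neq_Sp //; lia.
  + apply: RG_inG.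
    have -> : m - NL = l + m - (l + NL) by ring.
    by apply: inG_term; apply/andP; split; lia.
  + apply: RG_relp; apply: relp_diag; rewrite /upd2 ?eqxx ?neq_Sp /=; lia.
-
  set k' := upd2 k m m.
  have E : forall y, utk k y = Sop (utk k') y + (-1) * utk (upd2 k m l) y.
    move=> y; rewrite /Sop /k' mulz_utk mulz1_utk.
    have -> : m - NL = l by lia.
    rewrite -Hl -Hm upd2_id; ring.
  apply: RG_ext (RG_lin (-1) _ _) (fun y => esym (E y)).
    by apply: RG_relp; apply: relp_S; apply: relp_diag; rewrite /k' /upd2 ?eqxx ?neq_Sp.
  apply: RG_inG.
  have {2}-> : l = l + m - m by ring.
  by apply: inG_term; apply/andP; split; lia.
Qed.

End Pos.

Lemma inrel_lin (x1 x2 : Vt) c : in_relations x1 -> in_relations x2 -> in_relations (fun y => x1 y + c * x2 y).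
Proof.
move=> [w1 [g1 [H1 ->]]] [w2 [g2 [H2 ->]]].
exists (fun r y => w1 r y + c * w2 r y), (fun r y => g1 r y + c * g2 r y); split.
  move=> r Hr; have [F1 G1 C1] := H1 r Hr; have [F2 G2 C2] := H2 r Hr; split.
  - exact: finsupp_lin. - exact: finsupp_lin. - exact: cT_lin.
apply: functional_extensionality => y.
rewrite mulr_sumr -big_split /=; apply: eq_bigr => i _.
rewrite sTop_lin; ring.
Qed.

Lemma inrel_ext (x x' : Vt) : in_relations x -> (forall y, x y = x' y) -> in_relations x'.
Proof. by move=> H E; have <- : x = x' by apply: functional_extensionality. Qed.


Lemma inrel0 : in_relations (fun _ : Idx => 0).
Proof.
exists (fun _ _ => 0), (fun _ _ => 0); split.
  by move=> r _; split; [exact: finsupp0|exact: finsupp0|exact: cT_rel0].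
apply: functional_extensionality => y; rewrite big1 // => i _; by rewrite sTop0 subrr.
Qed.

Lemma inG_inrel p l m k z :
  (forall t, l < t <= m -> in_relations (utk (upd2 p k t (l + m - t)))) ->
  inG p l m k z -> in_relations z.
Proof.
move=> H [s [A E]]; apply: inrel_ext _ (fun y => esym (E y)).
elim: s A {E} => [_|t s IHs] /=.
  by apply: inrel_ext inrel0 _ => y; rewrite big_nil.
case/andP => At As.
have T : in_relations (fun y => t.1 * utk (upd2 p k t.2 (l + m - t.2)) y).
  case/orP: At => [/eqP ->|Hb].
    by apply: inrel_ext inrel0 _ => y; rewrite mul0r.
  by apply: inrel_ext (inrel_lin t.1 inrel0 (H _ Hb)) _ => y; rewrite add0r.
apply: inrel_ext (inrel_lin 1 (IHs As) T) _.
by move=> y; rewrite big_cons mul1r addrC.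
Qed.

Lemma RG_inrel p (Hp1 : (p.+1 < n)%N) l m k x :
  (forall t, l < t <= m -> in_relations (utk (upd2 p k t (l + m - t)))) ->
  RG p l m k x -> in_relations x.
Proof.
move=> H [z [G R]].
apply: inrel_ext (inrel_lin 1 (inG_inrel H G) (relp_in Hp1 R)) _ => y; ring.
Qed.

Lemma chainC (len : nat) : forall (m : int) (p : nat) (k : nat -> int),
  (p + len.+1 < n)%N -> (forall i, (i <= len)%N -> k (p + i)%N = m - i%:Z) ->
  k (p + len.+1)%N = m -> in_relations (utk k).
Proof.
elim/ltn_ind: len => len IH m p k Hn Hk Hlast.
case: len IH Hn Hk Hlast => [|len] IH Hn Hk Hlast.
  have Hp1 : (p.+1 < n)%N by rewrite -addn1.
  apply: (relp_in Hp1); apply: (relp_diag Hp1).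
  by move: (Hk 0%N (leqnn 0)) Hlast; rewrite addn0 addn1 => -> ->; rewrite subr0.
set p' := (p + len.+1)%N.
have Hp1 : (p'.+1 < n)%N by rewrite /p' -addnS.
set l := m - len.+1%:Z.
have Hl : k p' = l by rewrite /p' Hk.
have Hm : k p'.+1 = m by rewrite /p' -addnS.
have Hlm : l < m by rewrite /l; lia.
apply: (RG_inrel Hp1 _ (LB Hp1 (d := `|m - l|) Hl Hm Hlm (leqnn _))).
move=> t /andP [H1 H2].
have [a Ha] : exists a : nat, m - t = a%:Z by exists `|m - t|%N; lia.
have [b Hb] : exists b : nat, t - l = b.+1%:Z by exists (`|t - l| - 1)%N; lia.
apply: (IH b _ t (p + a)%N).
- rewrite /l in Hb; lia.
- rewrite /l in Hb; lia.
- move=> i Hi; rewrite /upd2.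
  have -> : ((p + a + i)%N == p') = false by rewrite /p'; rewrite /l in Hb; lia.
  have -> : ((p + a + i)%N == p'.+1) = false by rewrite /p'; rewrite /l in Hb; lia.
  rewrite -addnA Hk; last by rewrite /l in Hb; lia.
  lia.
- rewrite /upd2.
  have -> : ((p + a + b.+1)%N == p') = true by rewrite /p'; rewrite /l in Hb; lia.
  by [].
Qed.

Lemma chainD (len : nat) : forall (l : int) (p : nat) (k : nat -> int),
  (p + len.+1 < n)%N -> k p = l ->
  (forall i, (i <= len)%N -> k (p + i.+1)%N = l + len%:Z - i%:Z) -> in_relations (utk k).
Proof.
elim/ltn_ind: len => len IH l p k Hn Hl Hk.
have Hp1 : (p.+1 < n)%N by move: Hn; rewrite addnS; lia.
case: len IH Hn Hk => [|len] IH Hn Hk.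
  apply: (relp_in Hp1); apply: (relp_diag Hp1).
  by move: (Hk 0%N (leqnn 0)); rewrite addn1 Hl => ->; rewrite addr0 subr0.
set m : int := l + len.+1%:Z.
have Hm : k p.+1 = m by rewrite -addn1 Hk // subr0.
have Hlm : l < m by rewrite /m; lia.
apply: (RG_inrel Hp1 _ (LB Hp1 (d := `|m - l|) Hl Hm Hlm (leqnn _))).
move=> t /andP [H1 H2].
have Hc0 : 0 <= m - 1 - (l + m - t) by lia.
pose c := absz ((m - 1 - (l + m - t))%R).
have Hc : (m - 1 - (l + m - t) : int) = c%:Z by rewrite /c gez0_abs.
apply: (IH c _ (l + m - t) p.+1).
- rewrite /m in Hc; lia.
- rewrite /m in Hc; lia.
- by rewrite /upd2 eqxx neq_Sp.
- move=> i Hi; rewrite /upd2.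
  have -> : ((p.+1 + i.+1)%N == p) = false by lia.
  have -> : ((p.+1 + i.+1)%N == p.+1) = false by lia.
  have -> : (p.+1 + i.+1 = p + i.+1.+1)%N by lia.
  rewrite Hk; last by rewrite /m in Hc; lia.
  rewrite /m in Hc *; lia.
Qed.

End All.

Lemma utensor_utk N L (HN : (0 < N)%N) (HL : (0 < L)%N) ks :
  @utensor N L ks = utk (n := size ks) HN HL (fun r => nth 0 ks r).
Proof.
apply: functional_extensionality => y; rewrite /utensor /utk /utA.
congr (if _ then _ else _); apply/forallP/eqP => [H|->].
- apply/ffunP => j; rewrite ffunE; have /and3P [E1 E2 E3] := H j.
  move: E1 E2 E3; case: (y j) => [[u e] b] /= /eqP -> /eqP E2 /eqP E3.
  rewrite /atom; congr (_, _); [congr (_, _)|]; apply: val_inj => /=.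
  + move: E2; rewrite /kdot -/(ed N L (nth 0 ks j)) => E2.
    have : (e : nat)%:Z = ed N L (nth 0 ks j) by lia.
    by move=> <-.
  + move: E3; rewrite /kbar -/(bd N (nth 0 ks j)) => E3.
    have : (b : nat)%:Z = bd N (nth 0 ks j) by lia.
    by move=> <-.
- move=> j; rewrite ffunE /atom /= eqxx /=.
  rewrite gez0_abs ?ed_ge0 // gez0_abs ?bd_ge0 //.
  by rewrite /kdot /kbar /ed /bd !eqxx.
Qed.

Theorem mainTheorem2 (N L : nat) (HN : (0 < N)%N) (HL : (0 < L)%N)
    (l m : int) (hlm : l <= m) :
  wedge_zero N L (rcons (downfrom m l) m) /\
  wedge_zero N L (l :: downfrom m l).
Proof.
have Hsz : size (downfrom m l) = (`|m - l|).+1 by rewrite /downfrom size_map size_iota.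
have Hnth : forall i, (i <= `|m - l|)%N -> nth 0 (downfrom m l) i = m - i%:Z.
  move=> i Hi; rewrite /downfrom (nth_map 0%N); last by rewrite size_iota.
  by rewrite nth_iota.
split.
- rewrite /wedge_zero utensor_utk.
  apply: (chainC HN HL (len := `|m - l|) (m := m) (p := 0%N)).
  + by rewrite size_rcons Hsz.
  + by move=> i Hi; rewrite add0n nth_rcons Hsz ltnS Hi Hnth.
  + by rewrite add0n nth_rcons Hsz ltnn eqxx.
- rewrite /wedge_zero utensor_utk.
  apply: (chainD HN HL (len := `|m - l|) (l := l) (p := 0%N)) => //.
  + by rewrite add0n; change (`|m - l|.+1 < (size (downfrom m l)).+1)%N; rewrite Hsz.
  + move=> i Hi; rewrite add0n; change (nth 0 (downfrom m l) i = l + `|m - l|%N%:Z - i%:Z); rewrite Hnth //.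
    have -> : (`|m - l|%N : int) = m - l by rewrite gez0_abs // subr_ge0.
    ring.
Qed.
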